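(* Let $\hat\sigma_x,\hat\sigma_y,\hat\sigma_z$ be the Pauli matrices and, for $m\in\{-\tfrac12,\tfrac12\}$, $\alpha\in[0,2\pi]$, $\beta\in[0,\pi]$, let $$\hat U(m,\alpha,\beta)=\tfrac12\hat I-m\cos\alpha\sin\beta\,\hat\sigma_x-m\sin\alpha\sin\beta\,\hat\sigma_y+m\cos\beta\,\hat\sigma_z .$$ For a qubit state (density matrix) $\hat\rho$ on $\mathbb{C}^2$ define its tomogram $w_{\hat\rho}(m,\alpha,\beta)=\mathrm{Tr}\big(\hat\rho\,\hat U(m,\alpha,\beta)\big)$, and let $\mathfrak T(\mathbb{C}^2)$ be the set of all such tomograms. For $a\in\{x,y,z\}$ let $\breve\Sigma_a$ be the map on $\mathfrak T(\mathbb{C}^2)$ defined by $\breve\Sigma_a(w_{\hat\rho})=w_{\hat\sigma_a\hat\rho\hat\sigma_a}$. Write ${\bf x}=(m,\alpha,\beta)$, ${\bf x}'=(m',\alpha',\beta')$ and $$\int g({\bf x}')\,d{\bf x}':=\sum_{m'=\pm1/2}\frac{1}{2\pi}\int_0^{2\pi}\!\!\int_0^{\pi} g(m',\alpha',\beta')\sin\beta'\,d\beta'\,d\alpha'.$$ Then for each $a\in\{x,y,z\}$ and every $w\in\mathfrak T(\mathbb{C}^2)$, $$\breve\Sigma_a(w)({\bf x})=\int K_a({\bf x};{\bf x}')\,w({\bf x}')\,d{\bf x}',$$ where, with $\delta_{mm'}$ the Kronecker delta, $$K_x({\bf x};{\bf x}')=\tfrac12\delta_{mm'}\big(1+3\cos\alpha\sin\beta\cos\alpha'\sin\beta'-3\sin\alpha\sin\beta\sin\alpha'\sin\beta'-3\cos\beta\cos\beta'\big),$$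 $$K_y({\bf x};{\bf x}')=\tfrac12\delta_{mm'}\big(1-3\cos\alpha\sin\beta\cos\alpha'\sin\beta'+3\sin\alpha\sin\beta\sin\alpha'\sin\beta'-3\cos\beta\cos\beta'\big),$$ $$K_z({\bf x};{\bf x}')=\tfrac12\delta_{mm'}\big(1-3\cos\alpha\sin\beta\cos\alpha'\sin\beta'-3\sin\alpha\sin\beta\sin\alpha'\sin\beta'+3\cos\beta\cos\beta'\big).$$
   Context: A qubit state is a positive semidefinite $2\times2$ complex matrix of trace one. $\hat I$ denotes the $2\times 2$ identity matrix. *)

(* Defs.v *)
From Stdlib Require Import Reals.
From Coquelicot Require Export Coquelicot.
Open Scope R_scope.

Record Mat2 := mkMat2 { e11 : C; e12 : C; e21 : C; e22 : C }.

Definition mmul (A B : Mat2) : Mat2 :=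
  mkMat2 (Cplus (Cmult (e11 A) (e11 B)) (Cmult (e12 A) (e21 B)))
         (Cplus (Cmult (e11 A) (e12 B)) (Cmult (e12 A) (e22 B)))
         (Cplus (Cmult (e21 A) (e11 B)) (Cmult (e22 A) (e21 B)))
         (Cplus (Cmult (e21 A) (e12 B)) (Cmult (e22 A) (e22 B))).

Definition madd (A B : Mat2) : Mat2 :=
  mkMat2 (Cplus (e11 A) (e11 B)) (Cplus (e12 A) (e12 B))
         (Cplus (e21 A) (e21 B)) (Cplus (e22 A) (e22 B)).

Definition mscale (c : C) (A : Mat2) : Mat2 :=
  mkMat2 (Cmult c (e11 A)) (Cmult c (e12 A)) (Cmult c (e21 A)) (Cmult c (e22 A)).

Definition mtrace (A : Mat2) : C := Cplus (e11 A) (e22 A).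

Definition Id2 : Mat2 := mkMat2 (RtoC 1) (RtoC 0) (RtoC 0) (RtoC 1).
Definition sigma_x : Mat2 := mkMat2 (RtoC 0) (RtoC 1) (RtoC 1) (RtoC 0).
Definition sigma_y : Mat2 := mkMat2 (RtoC 0) (Copp Ci) Ci (RtoC 0).
Definition sigma_z : Mat2 := mkMat2 (RtoC 1) (RtoC 0) (RtoC 0) (RtoC (-1)).

Definition quadform (A : Mat2) (v1 v2 : C) : C :=
  Cplus (Cmult (Cconj v1) (Cplus (Cmult (e11 A) v1) (Cmult (e12 A) v2)))
        (Cmult (Cconj v2) (Cplus (Cmult (e21 A) v1) (Cmult (e22 A) v2))).

Definition psd (A : Mat2) : Prop :=
  forall v1 v2 : C, Im (quadform A v1 v2) = 0 /\ 0 <= Re (quadform A v1 v2).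

Definition is_qubit_state (rho : Mat2) : Prop := psd rho /\ mtrace rho = RtoC 1.

Definition Uop (m alpha beta : R) : Mat2 :=
  madd (mscale (RtoC (1/2)) Id2)
  (madd (mscale (RtoC (- m * cos alpha * sin beta)) sigma_x)
  (madd (mscale (RtoC (- m * sin alpha * sin beta)) sigma_y)
        (mscale (RtoC (m * cos beta)) sigma_z))).

Definition tomogram (rho : Mat2) (m alpha beta : R) : C :=
  mtrace (mmul rho (Uop m alpha beta)).

Definition is_tomogram (w : R -> R -> R -> C) : Prop :=
  exists rho, is_qubit_state rho /\ w = tomogram rho.

Inductive axis := ax_x | ax_y | ax_z.

Definition pauli (a : axis) : Mat2 :=
  match a with ax_x => sigma_x | ax_y => sigma_y | ax_z => sigma_z end.

Definition Sigma_breve (a : axis) (w w' : R -> R -> R -> C) : Prop :=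
  exists rho, is_qubit_state rho /\ w = tomogram rho /\
              w' = tomogram (mmul (pauli a) (mmul rho (pauli a))).

Definition kron_delta (m m' : R) : R :=
  if Req_EM_T m m' then 1 else 0.

Definition kernel (a : axis) (m alpha beta m' alpha' beta' : R) : R :=
  let cx := cos alpha * sin beta * (cos alpha' * sin beta') in
  let cy := sin alpha * sin beta * (sin alpha' * sin beta') in
  let cz := cos beta * cos beta' in
  match a with
  | ax_x => 1/2 * kron_delta m m' * (1 + 3 * cx - 3 * cy - 3 * cz)
  | ax_y => 1/2 * kron_delta m m' * (1 - 3 * cx + 3 * cy - 3 * cz)
  | ax_z => 1/2 * kron_delta m m' * (1 - 3 * cx - 3 * cy + 3 * cz)
  end.

Definition tomo_integral (g : R -> R -> R -> C) : C :=
  let part (m' : R) : C :=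
    Cmult (RtoC (/ (2 * PI)))
      (RInt (V := C_R_CompleteNormedModule)
        (fun a' => RInt (V := C_R_CompleteNormedModule)
                     (fun b' => Cmult (RtoC (sin b')) (g m' a' b')) 0 PI)
        0 (2 * PI)) in
  Cplus (part (1/2)) (part (-(1/2))).

(* Main.v *)
Require Import Defs.
From Stdlib Require Import Reals Lra Nsatz.
From Coquelicot Require Import Coquelicot.
Open Scope R_scope.
Ltac toR := match goal with |- ?u = ?v => change (@eq R u v) end.

Lemma pairC (g : R -> C) a b v1 v2 :
  is_RInt (fun x => fst (g x)) a b v1 -> is_RInt (fun x => snd (g x)) a b v2 ->
  is_RInt (V := C_R_CompleteNormedModule) g a b ((v1, v2) : C).
Proof.
  intros H1 H2.
  exact (@is_RInt_fct_extend_pair R_NormedModule R_NormedModule g a b v1 v2 H1 H2).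
Qed.

Lemma inner k0 k1 k2 l0 l1 l2 :
  is_RInt (fun b => sin b * ((k0 + k1*cos b + k2*sin b)*(l0 + l1*cos b + l2*sin b))) 0 PI
    (2*k0*l0 + PI/2*(k0*l2+k2*l0) + 2/3*k1*l1 + 4/3*k2*l2).
Proof.
  set (F := fun b => k0*l0*(- cos b) + (k0*l1+k1*l0)*(sin b ^ 2 / 2)
     + (k0*l2+k2*l0)*((b - sin b * cos b)/2) + k1*l1*(- cos b ^ 3 / 3)
     + (k1*l2+k2*l1)*(sin b ^ 3 / 3) + k2*l2*(- cos b + cos b ^ 3 / 3)).
  replace (2*k0*l0 + PI/2*(k0*l2+k2*l0) + 2/3*k1*l1 + 4/3*k2*l2) with (minus (F PI) (F 0)).
  2:{ unfold F, minus, plus, opp; simpl. rewrite sin_PI, cos_PI, sin_0, cos_0. field. }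
  apply (is_RInt_derive (V:=R_CompleteNormedModule)).
  - intros x _. unfold F. auto_derive; [exact I|].
    pose proof (sin2_cos2 x) as H. unfold Rsqr in H.
    assert (2 * /2 = 1) by field. assert (3 * /3 = 1) by field.
    nsatz.
  - intros y _. apply (ex_derive_continuous (V:=R_CompleteNormedModule)). auto_derive. exact I.
Qed.

Lemma outer A B C0 D E F :
  is_RInt (fun a => A + B*cos a + C0*sin a + D*cos a^2 + E*sin a*cos a + F*sin a^2) 0 (2*PI)
    (2*PI*A + PI*D + PI*F).
Proof.
  set (G := fun a => A*a + B*sin a - C0*cos a + D*((a + sin a * cos a)/2) + E*(sin a^2/2)
     + F*((a - sin a * cos a)/2)).
  replace (2*PI*A + PI*D + PI*F) with (minus (G (2*PI)) (G 0)).
  2:{ unfold G, minus, plus, opp; simpl. rewrite sin_2PI, cos_2PI, sin_0, cos_0. field. }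
  apply (is_RInt_derive (V:=R_CompleteNormedModule)).
  - intros x _. unfold G. auto_derive; [exact I|].
    pose proof (sin2_cos2 x) as H. unfold Rsqr in H.
    assert (2 * /2 = 1) by field. cbn [pow]. nsatz.
  - intros y _. apply (ex_derive_continuous (V:=R_CompleteNormedModule)). auto_derive. exact I.
Qed.
Definition Kd ex ey ez X Y Z a' b := 1/2*(1 + 3*ex*(X*(cos a' * sin b)) + 3*ey*(Y*(sin a' * sin b)) + 3*ez*(Z*cos b)).
Definition Wd t p q s m a' b := t + m*(p*cos b + q*(cos a' * sin b) + s*(sin a' * sin b)).
Definition Iin ex ey ez X Y Z t p q s m a' :=
  let k0 := 1/2 in let k1 := 3/2*ez*Z in let k2 := 3/2*(ex*X*cos a' + ey*Y*sin a') in
  let l0 := t in let l1 := m*p in let l2 := m*(q*cos a' + s*sin a') in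
  2*k0*l0 + PI/2*(k0*l2+k2*l0) + 2/3*k1*l1 + 4/3*k2*l2.

Lemma gen_inner ex ey ez X Y Z t p q s m a' :
  is_RInt (fun b => sin b * (Kd ex ey ez X Y Z a' b * Wd t p q s m a' b)) 0 PI
    (Iin ex ey ez X Y Z t p q s m a').
Proof.
  eapply (is_RInt_ext (V:=R_CompleteNormedModule)); [| apply (inner (1/2) (3/2*ez*Z) (3/2*(ex*X*cos a' + ey*Y*sin a')) t (m*p) (m*(q*cos a' + s*sin a')))].
  intros b _. unfold Kd, Wd; toR; field.
Qed.

Lemma gen_outer ex ey ez X Y Z t p q s m :
  is_RInt (Iin ex ey ez X Y Z t p q s m) 0 (2*PI)
    (2*PI*(t + m*(ex*q*X + ey*s*Y + ez*p*Z))).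
Proof.
  replace (2*PI*(t + m*(ex*q*X + ey*s*Y + ez*p*Z))) with
    (2*PI*(2*(1/2)*t + 2/3*(3/2*ez*Z)*(m*p)) + PI*(2*ex*X*m*q) + PI*(2*ey*Y*m*s)) by field.
  eapply (is_RInt_ext (V:=R_CompleteNormedModule)); [| apply (outer (2*(1/2)*t + 2/3*(3/2*ez*Z)*(m*p))
     (PI/2*(1/2*m*q + 3/2*ex*X*t)) (PI/2*(1/2*m*s + 3/2*ey*Y*t)) (2*ex*X*m*q)
     (2*(ex*X*m*s + ey*Y*m*q)) (2*ey*Y*m*s))].
  intros a _. unfold Iin; simpl; toR; field.
Qed.

Definition sgx a := match a with ax_x => 1 | ax_y => -1 | ax_z => -1 end.
Definition sgy a := match a with ax_x => -1 | ax_y => 1 | ax_z => -1 end.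
Definition sgz a := match a with ax_x => -1 | ax_y => -1 | ax_z => 1 end.

Lemma kernel_diag a m al be a' b' :
  kernel a m al be m a' b' = Kd (sgx a) (sgy a) (sgz a) (cos al * sin be) (sin al * sin be) (cos be) a' b'.
Proof.
  unfold kernel, kron_delta, Kd. destruct (Req_EM_T m m) as [_|n]; [|contradiction].
  destruct a; simpl; field.
Qed.

Lemma tomo_eq ar ai br bi cr ci dr di m a b :
  tomogram (mkMat2 (ar,ai) (br,bi) (cr,ci) (dr,di)) m a b =
  (((ar+dr)/2 + m*((ar-dr)*cos b + (-(br+cr))*(cos a * sin b) + (bi-ci)*(sin a * sin b))),
   ((ai+di)/2 + m*((ai-di)*cos b + (-(bi+ci))*(cos a * sin b) + (cr-br)*(sin a * sin b)))).
Proof.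
  unfold tomogram, Uop, mtrace, mmul, madd, mscale, Id2, sigma_x, sigma_y, sigma_z. 
  cbn [e11 e12 e21 e22]. 
  unfold Cmult, Cplus, RtoC, Ci, Copp. 
  cbn [fst snd]. 
  f_equal; field.
Qed.

Definition conjm (ax : axis) (ar ai br bi cr ci dr di : R) : Mat2 :=
  match ax with
  | ax_x => mkMat2 (dr,di) (cr,ci) (br,bi) (ar,ai)
  | ax_y => mkMat2 (dr,di) (-cr,-ci) (-br,-bi) (ar,ai)
  | ax_z => mkMat2 (ar,ai) (-br,-bi) (-cr,-ci) (dr,di)
  end.

Lemma conj_eq ax ar ai br bi cr ci dr di :
  mmul (pauli ax) (mmul (mkMat2 (ar,ai) (br,bi) (cr,ci) (dr,di)) (pauli ax)) = conjm ax ar ai br bi cr ci dr di.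
Proof.
  destruct ax; unfold pauli, mmul, sigma_x, sigma_y, sigma_z, conjm, Cmult, Cplus, RtoC, Ci, Copp; cbn [e11 e12 e21 e22 fst snd];
  repeat f_equal; field.
Qed.

Lemma main_part (ax : axis) (rho : Mat2) m al be :
  RInt (V:=C_R_CompleteNormedModule) (fun a' => RInt (V:=C_R_CompleteNormedModule)
     (fun b' => Cmult (RtoC (sin b')) (Cmult (RtoC (kernel ax m al be m a' b')) (tomogram rho m a' b'))) 0 PI) 0 (2*PI)
  = Cmult (RtoC (2*PI)) (tomogram (mmul (pauli ax) (mmul rho (pauli ax))) m al be).
Proof.
  destruct rho as [[ar ai] [br bi] [cr ci] [dr di]].
  set (X := cos al * sin be). set (Y := sin al * sin be). set (Z := cos be).
  apply is_RInt_unique.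
  apply (is_RInt_ext (V:=C_R_CompleteNormedModule)
    (fun a' => ((Iin (sgx ax) (sgy ax) (sgz ax) X Y Z ((ar+dr)/2) (ar-dr) (-(br+cr)) (bi-ci) m a',
                 Iin (sgx ax) (sgy ax) (sgz ax) X Y Z ((ai+di)/2) (ai-di) (-(bi+ci)) (cr-br) m a') : C))).
  - intros x _. symmetry. apply is_RInt_unique. apply pairC.
    + eapply (is_RInt_ext (V:=R_CompleteNormedModule)); [| apply gen_inner].
      intros y _. rewrite kernel_diag, tomo_eq. unfold Wd, Cmult, RtoC. cbn [fst snd]. toR; unfold X, Y, Z; field.
    + eapply (is_RInt_ext (V:=R_CompleteNormedModule)); [| apply gen_inner].
      intros y _. rewrite kernel_diag, tomo_eq. unfold Wd, Cmult, RtoC. cbn [fst snd]. toR; unfold X, Y, Z; field.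
  - match goal with |- is_RInt _ _ _ ?v => replace v with
      ((2*PI*((ar+dr)/2 + m*(sgx ax*(-(br+cr))*X + sgy ax*(bi-ci)*Y + sgz ax*(ar-dr)*Z)),
        2*PI*((ai+di)/2 + m*(sgx ax*(-(bi+ci))*X + sgy ax*(cr-br)*Y + sgz ax*(ai-di)*Z))) : C) end.
    + apply pairC; simpl; apply gen_outer.
    + unfold X, Y, Z. rewrite conj_eq.
      destruct ax; cbn [conjm]; rewrite tomo_eq; unfold Cmult, RtoC; cbn [fst snd sgx sgy sgz]; f_equal; field.
Qed.

Lemma zeroR a b : is_RInt (fun _ => 0) a b 0.
Proof.
  pose proof (is_RInt_const (V:=R_CompleteNormedModule) a b zero) as H.
  match type of H with is_RInt _ _ _ ?v => replace v with 0 in H end; [exact H|].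
  symmetry. unfold scal; simpl. unfold mult; simpl. unfold zero; simpl. ring.
Qed.

Lemma zero_part a m al be m' (g : R -> R -> R -> C) : m <> m' ->
  RInt (V:=C_R_CompleteNormedModule) (fun a' => RInt (V:=C_R_CompleteNormedModule)
     (fun b' => Cmult (RtoC (sin b')) (Cmult (RtoC (kernel a m al be m' a' b')) (g m' a' b'))) 0 PI) 0 (2*PI)
  = RtoC 0.
Proof.
  intros Hne.
  apply is_RInt_unique.
  apply (is_RInt_ext (V:=C_R_CompleteNormedModule) (fun _ => ((0,0):C))).
  - intros x _. symmetry. apply is_RInt_unique.
    apply (is_RInt_ext (V:=C_R_CompleteNormedModule) (fun _ => ((0,0):C))).
    + intros y _. unfold kernel, kron_delta. destruct (Req_EM_T m m') as [e|_]; [contradiction|].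
      destruct (g m' x y) as [g1 g2].
      destruct a; unfold Cmult, RtoC; simpl; f_equal; field.
    + apply pairC; simpl; apply zeroR.
  - apply pairC; simpl; apply zeroR.
Qed.

Lemma final_alg (T : C) : T = Cplus (Cmult (RtoC (/ (2*PI))) (Cmult (RtoC (2*PI)) T)) (Cmult (RtoC (/ (2*PI))) (RtoC 0)).
Proof.
  destruct T as [t1 t2]. pose proof PI_neq0.
  unfold Cmult, Cplus, RtoC; simpl; f_equal; field; auto.
Qed.

Theorem proposition3 :
  forall (a : axis) (w w' : R -> R -> R -> C),
    is_tomogram w ->
    Sigma_breve a w w' ->
    forall m alpha beta : R,
      (m = 1/2 \/ m = -(1/2)) ->
      0 <= alpha <= 2 * PI ->
      0 <= beta <= PI ->
      w' m alpha beta =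
      tomo_integral (fun m' alpha' beta' =>
        Cmult (RtoC (kernel a m alpha beta m' alpha' beta')) (w m' alpha' beta')).
Proof.
  intros a w w' _ [rho [_ [Hw Hw']]] m al be Hm _ _. subst w w'.
  unfold tomo_integral. cbv zeta beta.
  destruct Hm as [Hm|Hm]; subst m.
  - rewrite main_part. rewrite zero_part by lra. apply final_alg.
  - rewrite (main_part a rho (-(1/2))). rewrite (zero_part a (-(1/2)) al be (1/2)) by lra.
    rewrite Cplus_comm. apply final_alg.
Qed.
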